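(* Let $n \geq 2$, $d \geq 1$, $g \geq 0$ be integers satisfying $g < d^2/4n + 1$. Then there are integers $d_0 \geq 1$ and $g_0 \geq 0$ such that $d_0 \equiv d \pmod{2n}$ and $d_0^2-4n(g_0-1)=d^2-4n(g-1)$, and satisfying one of the two following conditions: (a) $g_0 < d_0-n$; (b) $d_0 \leq 2n$ and $d_0-n \leq g_0 < d_0^2/4n + 1$. *)

(* Defs.v *)
From Stdlib Require Export ZArith.

(* Main.v *)
Require Import Defs.
From Stdlib Require Import ZArith Lia.
Open Scope Z_scope.

Lemma aux (n : Z) (m : nat) : 2 <= n -> forall d g : Z,
  (Z.to_nat d <= m)%nat ->
  1 <= d -> 0 <= g ->
  4 * n * (g - 1) < d ^ 2 ->
  exists d0 g0 : Z,
    1 <= d0 /\ 0 <= g0 /\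
    (2 * n | d0 - d) /\
    d0 ^ 2 - 4 * n * (g0 - 1) = d ^ 2 - 4 * n * (g - 1) /\
    (g0 < d0 - n \/
     (d0 <= 2 * n /\ d0 - n <= g0 /\ 4 * n * (g0 - 1) < d0 ^ 2)).
Proof.
  intros Hn. induction m as [|m IH]; intros d g Hm Hd Hg HD.
  - lia.
  - destruct (Z_lt_le_dec g (d - n)) as [Hlt|Hge].
    + exists d, g. repeat split; try lia; try (exists 0; lia).
    + destruct (Z_le_gt_dec d (2*n)) as [Hle|Hgt].
      * exists d, g. repeat split; try lia; try (exists 0; lia).
      * destruct (IH (d - 2*n) (g - d + n)) as [d0 [g0 [H1 [H2 [[k Hk] [H4 H5]]]]]];
          try lia.
        exists d0, g0. repeat split; try lia.
        exists (k - 1). lia.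
Qed.

Theorem lemma3p10 (n d g : Z) :
  2 <= n -> 1 <= d -> 0 <= g ->
  4 * n * (g - 1) < d ^ 2 ->
  exists d0 g0 : Z,
    1 <= d0 /\ 0 <= g0 /\
    (2 * n | d0 - d) /\
    d0 ^ 2 - 4 * n * (g0 - 1) = d ^ 2 - 4 * n * (g - 1) /\
    (g0 < d0 - n \/
     (d0 <= 2 * n /\ d0 - n <= g0 /\ 4 * n * (g0 - 1) < d0 ^ 2)).
Proof.
  intros. apply (aux n (Z.to_nat d)); auto.
Qed.
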